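(* Let $G$ be a $k$-regular graph with $k\ge 43$ and let $C$ be a Hamiltonian cycle of $G$. Then there exists a set $S\subseteq V(G)$ such that (1) no two vertices adjacent on $C$ both lie in $S$, and (2) every vertex $v$ of $G$ either lies in $S$ or is joined to some vertex $w\in S$ by an edge of $G$ not in $C$. *)

(* Defs.v *)
From mathcomp Require Import all_boot.
Set Implicit Arguments. Unset Strict Implicit. Unset Printing Implicit Defensive.

Definition simple_graph (T : finType) (e : rel T) : Prop :=
  symmetric e /\ irreflexive e.

Definition regular (T : finType) (e : rel T) (k : nat) : Prop :=
  forall v : T, #|[set w | e v w]| = k.

Definition hamiltonian_cycle (T : finType) (e : rel T) (c : seq T) : Prop :=
  [/\ uniq c, (forall v : T, v \in c), 2 < size c & cycle e c].

Definition cycle_adj (T : eqType) (c : seq T) (v w : T) : bool :=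
  (next c v == w) || (next c w == v).

(* Main.v *)
From Stdlib Require Import ZArith Lia.
Require Import Defs.
From mathcomp Require Import all_boot.
From mathcomp Require Import zify.
Set Implicit Arguments. Unset Strict Implicit. Unset Printing Implicit Defensive.

Definition dep (T : finType) (A : {set {ffun T -> bool}}) (X : {set T}) :=
  forall f g : {ffun T -> bool}, (forall x, x \in X -> f x = g x) -> (f \in A) = (g \in A).

Definition mix (T : finType) (X : {set T}) (f g : {ffun T -> bool}) : {ffun T -> bool} :=
  [ffun x => if x \in X then f x else g x].

Lemma indep_card (T : finType) (X : {set T}) (A B : {set {ffun T -> bool}}) :
  dep A X -> dep B (~: X) ->
  #|A :&: B| * #|{ffun T -> bool}| = #|A| * #|B|.
Proof.
move=> dA dB.
pose phi (p : {ffun T -> bool} * {ffun T -> bool}) := (mix X p.1 p.2, mix X p.2 p.1).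
have inj : injective phi.
  have K : cancel phi phi.
    move=> [f g]; rewrite /phi /=; congr pair; apply/ffunP => x; rewrite !ffunE;
    by case: (x \in X).
  exact: can_inj K.
rewrite -cardsT -!cardsX -(card_preimset _ inj); apply: eq_card => -[f g].
rewrite !inE /= andbT.
have -> : (mix X f g \in A) = (f \in A) by apply: dA => x xX; rewrite ffunE xX.
have -> : (mix X f g \in B) = (g \in B).
  by apply: dB => x; rewrite inE ffunE => /negbTE ->.
by [].
Qed.
Lemma card_bigcup_le (I T : finType) (S : {set I}) (F : I -> {set T}) :
  #|\bigcup_(j in S) F j| <= \sum_(j in S) #|F j|.
Proof.
elim/big_rec2: _ => [|j n U _ le]; first by rewrite cards0.
by rewrite (leq_trans (leq_card_setU (F j) U).1) ?leq_add2l.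
Qed.

Definition Bc (O I : finType) (A : I -> {set O}) (S : {set I}) : {set O} :=
  \bigcap_(j in S) ~: A j.

Lemma lll (O I : finType) (A : I -> {set O}) (Dep : I -> {set I}) (D K : nat) :
  (forall i (S : {set I}), [disjoint S & Dep i] -> #|A i :&: Bc A S| * #|O| = #|A i| * #|Bc A S|) ->
  (forall i, #|Dep i| <= D) ->
  (forall i, K * #|A i| <= #|O|) ->
  4 * D <= K -> 3 <= K -> 0 < #|O| ->
  exists f : O, forall i, f \notin A i.
Proof.
move=> hind hD hA hK hK3 hO.
have claim : forall n (S : {set I}), #|S| <= n -> 0 < #|Bc A S| /\
    forall i, i \notin S -> K * #|A i :&: Bc A S| <= 2 * #|Bc A S|.
  elim=> [|n IH] S hS.
    have S0 : S = set0 by apply/eqP; rewrite -cards_eq0; lia.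
    have BT : Bc A S = setT by rewrite S0 /Bc big_set0.
    rewrite BT cardsT; split=> // i _.
    have := hA i; have := subset_leq_card (subsetIl (A i) setT). nia.
  have part2 : forall (S : {set I}), #|S| <= n.+1 ->
      forall i, i \notin S -> K * #|A i :&: Bc A S| <= 2 * #|Bc A S|.
    move=> S' hS' i iS.
    set S1 := S' :&: Dep i; set S2 := S' :\: Dep i.
    have d2 : [disjoint S2 & Dep i].
      by rewrite -setI_eq0; apply/eqP/setP=> x; rewrite !inE; case: (x \in Dep i); rewrite ?andbF.
    have ind2 := hind i S2 d2.
    have k2 : K * #|A i :&: Bc A S2| <= #|Bc A S2|.
      have := hA i; have : 0 < #|O| := hO. nia.
    have sub2 : Bc A S' \subset Bc A S2.
      apply/subsetP=> f /bigcapP fS; apply/bigcapP=> j; rewrite inE => /andP[_ jS].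
      exact: fS.
    case: (boolP (S1 == set0)) => [/eqP S10 | S1n0].
      have eqS : S2 = S'.
        apply/setP=> x; rewrite !inE; case xD: (x \in Dep i); rewrite ?andbT //=.
        case xS: (x \in S') => //; have : x \in S1 by rewrite !inE xS xD.
        by rewrite S10 inE.
      by move: k2; rewrite eqS; lia.
    have ltS2 : #|S2| <= n.
      have : #|S' :&: Dep i| + #|S' :\: Dep i| = #|S'| := cardsID _ _.
      have : 0 < #|S1| by rewrite card_gt0.
      rewrite /S1 /S2; lia.
    have [pos2 IH2] := IH S2 ltS2.
    set U := \bigcup_(j in S1) (A j :&: Bc A S2).
    have eqB : Bc A S' = Bc A S2 :\: U.
      apply/setP=> f; rewrite inE; apply/bigcapP/andP => [fS|[/bigcupP nU /bigcapP f2]].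
        split.
          apply/bigcupP; case=> j; rewrite inE => /andP[jS _]; case/setIP => fA _.
          by move: (fS j jS); rewrite inE fA.
        apply/bigcapP=> j; rewrite inE => /andP[_ jS]; exact: fS.
      move=> j jS; case jD: (j \in Dep i).
        rewrite inE; apply/negP=> fA; apply: nU; exists j; first by rewrite inE jS jD.
        by rewrite inE fA; apply/bigcapP.
      by apply: f2; rewrite inE jD jS.
    have Usub : U \subset Bc A S2.
      by apply/subsetP=> f /bigcupP[j _ /setIP[_ ->]].
    have cardB : #|Bc A S'| + #|U| = #|Bc A S2|.
      rewrite eqB; have := cardsID U (Bc A S2).
      by rewrite (setIidPr Usub) addnC.
    have cU : K * #|U| <= 2 * #|S1| * #|Bc A S2|.
      apply: (leq_trans (leq_mul (leqnn K) (card_bigcup_le _ _))).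
      have -> : 2 * #|S1| * #|Bc A S2| = \sum_(j in S1) (2 * #|Bc A S2|).
        by rewrite sum_nat_const; lia.
      rewrite big_distrr /=.
      apply: leq_sum => j jS1; apply: IH2.
      by move: jS1; rewrite !inE => /andP[_ ->].
    have s1D : #|S1| <= D by apply: leq_trans (hD i); apply: subset_leq_card; apply: subsetIr.
    have le1 : #|A i :&: Bc A S'| <= #|A i :&: Bc A S2| by apply/subset_leq_card/setISS.
    nia.
  split; last by apply: part2; lia.
  case: (boolP (S == set0)) => [/eqP S0 | Sn0].
    by rewrite S0 /Bc big_set0 cardsT.
  case/set0Pn: Sn0 => i iS.
  have hS' : #|S :\ i| <= n by move: hS; rewrite (cardsD1 i S) iS; lia.
  have [pos' IH'] := IH _ hS'.
  have := IH' i (ltac:(by rewrite setD11)).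
  have eqB : Bc A S = Bc A (S :\ i) :\: A i.
    by rewrite /Bc (big_setD1 i iS) /=; apply/setP=> f; rewrite !inE andbC.
  rewrite eqB; have := cardsID (A i) (Bc A (S :\ i)).
  rewrite [Bc A _ :&: A i]setIC; nia.
have [pos _] := claim #|[set: I]| setT (leqnn _).
move: pos; rewrite card_gt0 => /set0Pn[f /bigcapP fP].
by exists f => i; have := fP i (in_setT i); rewrite inE.
Qed.
Lemma next_mod (T : eqType) (c : seq T) (x : T) : x \in c ->
  next c x = nth x c ((index x c).+1 %% size c).
Proof.
move=> xc; rewrite next_nth xc.
case: c xc => // y c' xc.
have : index x (y :: c') < size (y :: c') by rewrite index_mem.
rewrite /= ltnS leq_eqVlt => /orP[/eqP -> | lt].
  by rewrite modnn /= nth_default.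
  by rewrite modn_small /=; [exact: set_nth_default | rewrite ltnS].
Qed.

Lemma next_neq (T : eqType) (c : seq T) (x : T) : uniq c -> 1 < size c -> x \in c ->
  next c x != x.
Proof.
move=> uc sc xc; rewrite next_mod //; apply/eqP => h.
have ix : index x c < size c by rewrite index_mem.
have := nth_uniq x (ltn_pmod (index x c).+1 (ltnW sc)) ix uc.
rewrite h nth_index // eqxx => /esym/eqP.
case: (ltngtP (index x c).+1 (size c)) => [lt | | eq].
- by rewrite modn_small // => h1; lia.
- by rewrite ltnNge ix.
- rewrite eq modnn => h0; move: eq; rewrite -h0; lia.
Qed.

Lemma next_closed (T : finType) (c : seq T) (N : {set T}) : uniq c ->
  (forall v : T, v \in c) -> N != set0 -> (forall w, w \in N -> next c w \in N) ->
  N = setT.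
Proof.
move=> uc allc /set0Pn[x0 x0N] cl.
set n := size c.
have n0 : 0 < n by move: (allc x0); rewrite -index_mem => /(leq_ltn_trans (leq0n _)).
have key : forall m, nth x0 c ((index x0 c + m) %% n) \in N.
  elim=> [|m IH]; first by rewrite addn0 modn_small ?nth_index ?index_mem.
  have := cl _ IH; rewrite next_mod ?mem_nth ?ltn_pmod //.
  by rewrite index_uniq ?ltn_pmod // -/n -addn1 modnDml addn1 addnS (set_nth_default x0) // ltn_pmod.
apply/setP=> y; rewrite inE.
have iy : index y c < n by rewrite index_mem.
have := key (index y c + n - index x0 c).
have ix : index x0 c < n by rewrite index_mem.
have -> : index x0 c + (index y c + n - index x0 c) = index y c + n by lia.
by rewrite modnDr modn_small // nth_index.
Qed.
Definition coord (T : finType) (z : T) (b : bool) : {set {ffun T -> bool}} :=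
  [set f : {ffun T -> bool} | f z == b].

Lemma dep_coord (T : finType) (z : T) b (Y : {set T}) : z \in Y -> dep (coord z b) Y.
Proof. by move=> zY f g h; rewrite !inE h. Qed.

Lemma dep_I (T : finType) (A B : {set {ffun T -> bool}}) Y : dep A Y -> dep B Y -> dep (A :&: B) Y.
Proof. by move=> dA dB f g h; rewrite !inE (dA f g h) (dB f g h). Qed.

Lemma card_coord (T : finType) (z : T) b : 2 * #|coord z b| = #|{ffun T -> bool}|.
Proof.
pose flip (f : {ffun T -> bool}) := [ffun x => if x == z then ~~ f x else f x].
have fK : cancel flip flip.
  by move=> f; apply/ffunP=> x; rewrite !ffunE; case: eqP => // _; rewrite negbK.
have e1 : #|coord z b| = #|coord z (~~ b)|.
  rewrite -(card_preimset _ (can_inj fK)); apply: eq_card => f.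
  by rewrite !inE ffunE eqxx; case: (f z); case: b.
have := cardsC (coord z b).
have -> : ~: coord z b = coord z (~~ b).
  by apply/setP=> f; rewrite !inE;  case: (f z) => /=; case: (b) => /=.
rewrite -e1 mul2n -addnn; exact.
Qed.

Lemma indep_coord (T : finType) (z : T) b (B : {set {ffun T -> bool}}) :
  dep B (~: [set z]) -> 2 * #|B :&: coord z b| = #|B|.
Proof.
move=> dB.
have := indep_card (X := [set z]) (A := coord z b) (B := B) (dep_coord b (set11 z)) dB.
have := card_coord z b.
have M0 : 0 < #|{ffun T -> bool}| by rewrite card_ffun card_bool expn_gt0.
rewrite setIC => h1 h2.
apply/eqP; rewrite -(eqn_pmul2r M0); apply/eqP; rewrite -mulnA h2 -h1; lia.
Qed.

Lemma split_coord (T : finType) (w : T) (A : {set {ffun T -> bool}}) :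
  #|A :&: coord w true| + #|A :&: coord w false| = #|A|.
Proof.
rewrite -(cardsID (coord w true) A); congr (_ + _); congr #|pred_of_set _|; apply/setP => f.
by rewrite !inE andbC; case: (f w).
Qed.

Definition EE (T : finType) (nx : T -> T) (N : {set T}) : {set {ffun T -> bool}} :=
  [set f : {ffun T -> bool} | [forall w in N, ~~ (f w && ~~ f (nx w))]].

Lemma dep_EE (T : finType) (nx : T -> T) (N Y : {set T}) :
  (forall y, y \in N -> y \in Y /\ nx y \in Y) -> dep (EE nx N) Y.
Proof.
move=> hY f g h; rewrite !inE; apply: eq_forallb_in => y yN.
by have [y1 y2] := hY y yN; rewrite !h.
Qed.

Lemma EE_D1 (T : finType) (nx : T -> T) (N : {set T}) w f : w \in N ->
  (f \in EE nx N) = (f \in EE nx (N :\ w)) && ~~ (f w && ~~ f (nx w)).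
Proof.
move=> wN; rewrite !inE; apply/forall_inP/andP => [h|[/forall_inP h1 h2] y yN].
  split; last exact: h.
  by apply/forall_inP => y /setD1P[_ /h].
by case: (eqVneq y w) => [->|yw] //; apply: h1; rewrite !inE yw.
Qed.

Lemma EE_bound (T : finType) (nx pv : T -> T) :
  cancel nx pv -> cancel pv nx -> (forall x, nx x != x) ->
  (forall N : {set T}, N != set0 -> (forall w, w \in N -> nx w \in N) -> N = setT) ->
  forall n (N : {set T}), #|N| = n -> N != setT ->
  4 ^ n * #|EE nx N| <= 3 ^ n * #|{ffun T -> bool}| /\
  forall z, z \notin N -> pv z \in N ->
    3 * 4 ^ n * #|EE nx N :&: coord z false| <= 3 ^ n * #|{ffun T -> bool}|.
Proof.
move=> hpn hnp hneq hcl; set M := #|{ffun T -> bool}|.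
elim=> [|n IH] N hN hT.
  have N0 : N = set0 by apply/eqP; rewrite -cards_eq0 hN.
  split.
    by rewrite !expn0 !mul1n /M max_card.
  by move=> z _; rewrite N0 inE.
have step : forall w, w \in N -> nx w \notin N ->
   [/\ 2 * #|EE nx N| = #|EE nx (N :\ w)| + #|EE nx (N :\ w) :&: coord w false|,
       2 * #|EE nx N :&: coord (nx w) false| = #|EE nx (N :\ w) :&: coord w false|
     & pv w \notin N :\ w -> 2 * #|EE nx (N :\ w) :&: coord w false| = #|EE nx (N :\ w)|].
  move=> w wN zN; set N' := N :\ w; set z := nx w.
  have zN' : z \notin N' by rewrite !inE negb_and zN orbT.
  have depz : dep (EE nx N') (~: [set z]).
    apply: dep_EE => y yN'; rewrite !inE; split.
      by apply: contraTneq yN' => ->.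
    apply: contraTneq yN' => /(can_inj hpn) ->; by rewrite !inE eqxx.
  have wz : w \in ~: [set z] by rewrite !inE eq_sym hneq.
  have depB : dep (EE nx N' :&: coord w true) (~: [set z]).
    by apply: dep_I => //; apply: dep_coord.
  have depB0 : dep (EE nx N' :&: coord w false) (~: [set z]).
    by apply: dep_I => //; apply: dep_coord.
  have S1 : EE nx N :&: coord w true = (EE nx N' :&: coord w true) :&: coord z true.
    apply/setP=> f; rewrite !in_setI (EE_D1 _ f wN) -/N' !inE.
    by case: (f w); case: (f z); rewrite /= ?andbT ?andbF.
  have S2 : EE nx N :&: coord w false = EE nx N' :&: coord w false.
    apply/setP=> f; rewrite !in_setI (EE_D1 _ f wN) -/N' !inE.
    by case: (f w); rewrite /= ?andbT ?andbF.
  have S3 : EE nx N :&: coord z false = (EE nx N' :&: coord w false) :&: coord z false.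
    apply/setP=> f; rewrite !in_setI (EE_D1 _ f wN) -/N' !inE.
    by case: (f w); case: (f z); rewrite /= ?andbT ?andbF.
  split.
  - have := split_coord w (EE nx N); rewrite S1 S2.
    have := split_coord w (EE nx N').
    have := indep_coord true depB.
    lia.
  - by rewrite S3; apply: indep_coord.
  - move=> pwN; apply: indep_coord; apply: dep_EE => y yN'; rewrite !inE; split.
      by apply: contraTneq yN' => ->; rewrite !inE eqxx.
    by apply: contraTneq yN' => /(congr1 pv); rewrite hpn => ->.
have N'P : forall w, w \in N -> #|N :\ w| = n /\ N :\ w != setT.
  move=> w wN; split; first by move: hN; rewrite (cardsD1 w N) wN; lia.
  by apply/eqP => /setP /(_ w); rewrite !inE eqxx.
have gen : forall w, w \in N -> nx w \notin N ->
    4 ^ n.+1 * #|EE nx N| <= 3 ^ n.+1 * M /\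
    3 * 4 ^ n.+1 * #|EE nx N :&: coord (nx w) false| <= 3 ^ n.+1 * M.
  move=> w wN zN; have [h1 h2 h3] := step w wN zN.
  have [c1 c2] := N'P w wN; have [I1 I2] := IH _ c1 c2.
  rewrite !expnS.
  case: (boolP (pv w \in N :\ w)) => pw.
    have := I2 w (ltac:(by rewrite !inE eqxx)) pw.
    split; nia.
  have := h3 pw; split; nia.
split.
  have : N != set0 by apply/eqP => N0; move: hN; rewrite N0 cards0.
  move=> Nn0.
  case: (boolP [exists w in N, nx w \notin N]) => [/exists_inP[w wN zN]|].
    by case: (gen w wN zN).
  rewrite negb_exists_in => /forall_inP hall.
  by move: hT; rewrite (hcl N Nn0) ?eqxx // => w /hall; rewrite negbK.
move=> z zN pzN.
have := gen (pv z) pzN; rewrite hnp => /(_ zN) [].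
by [].
Qed.
Lemma numbound m : 41 <= m -> 16 * (m + 2) ^ 2 * 3 ^ m <= 4 ^ m.
Proof.
elim: m => [//|m IH].
rewrite leq_eqVlt => /orP[/eqP <-|lt].
  by zify; vm_compute.
have := IH lt; rewrite !expnS; nia.
Qed.

Lemma dep_mono (T : finType) (A : {set {ffun T -> bool}}) (X X' : {set T}) :
  dep A X -> X \subset X' -> dep A X'.
Proof. by move=> dA sub f g h; apply: dA => x xX; apply: h; apply: (subsetP sub). Qed.

Theorem theorem4p3 (T : finType) (e : rel T) (k : nat) (c : seq T) :
  simple_graph e -> regular e k -> 43 <= k -> hamiltonian_cycle e c ->
  exists S : {set T},
    (forall v w : T, cycle_adj c v w -> ~~ ((v \in S) && (w \in S))) /\
    (forall v : T, v \in S \/ exists2 w : T, w \in S & e v w && ~~ cycle_adj c v w).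
Proof.
move=> [sym irr] hreg hk [uc allc sc cyc].
set nx := next c; set pv := prev c.
have hpn : cancel nx pv := prev_next uc.
have hnp : cancel pv nx := next_prev uc.
have hneq : forall x, nx x != x by move=> x; apply: next_neq => //; apply: ltnW.
have hcl : forall N : {set T}, N != set0 -> (forall w, w \in N -> nx w \in N) -> N = setT.
  by move=> N; apply: next_closed.
pose Nv v := [set w | e v w && ~~ cycle_adj c v w].
pose Y v := Nv v :|: nx @: Nv v.
pose A v := EE nx (Nv v).
pose Dep v := [set u | ~~ [disjoint Y u & Y v]].
have depA : forall v, dep (A v) (Y v).
  move=> v; apply: dep_EE => y yN; split; first by rewrite inE yN.
  by rewrite inE imset_f ?orbT.
have NvK : forall v, #|Nv v| <= k.
  move=> v; rewrite -(hreg v); apply: subset_leq_card; apply/subsetP => w.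
  by rewrite !inE => /andP[].
have Nvk : forall v, k <= #|Nv v| + 2.
  move=> v; rewrite -(hreg v).
  apply: leq_trans (_ : #|Nv v :|: [set nx v; pv v]| <= _).
    apply: subset_leq_card; apply/subsetP => w; rewrite !inE => evw.
    rewrite evw /=; case: (boolP (cycle_adj c v w)) => //.
    rewrite /cycle_adj -/nx => /orP[/eqP -> | /eqP h]; first by rewrite eqxx orbT.
    by rewrite -h -/nx hpn eqxx !orbT.
  apply: leq_trans (leq_card_setU _ _).1 _.
  by rewrite leq_add2l cards2; case: (_ != _).
have M0 : 0 < #|{ffun T -> bool}| by rewrite card_ffun card_bool expn_gt0.
have [f hf] : exists f : {ffun T -> bool}, forall v, f \notin A v.
  apply: (@lll _ _ A Dep (4 * k ^ 2) (16 * k ^ 2)).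
  - move=> i S dS; apply: (indep_card (X := Y i)) => //.
    move=> f g h; apply/bigcapP/bigcapP => hh j jS; have := hh j jS; rewrite !in_setC.
      have dj : [disjoint Y j & Y i].
        by have := disjointFr dS jS; rewrite inE => /negbFE.
      rewrite (depA j f g) // => x xj; apply: h; rewrite inE.
      by rewrite (disjointFr dj xj).
    have dj : [disjoint Y j & Y i].
      by have := disjointFr dS jS; rewrite inE => /negbFE.
    rewrite (depA j f g) // => x xj; apply: h; rewrite inE.
    by rewrite (disjointFr dj xj).
  - move=> v.
    have sub : Dep v \subset \bigcup_(x in Y v) ([set u | e x u] :|: [set u | e (pv x) u]).
      apply/subsetP => u; rewrite inE -setI_eq0 => /set0Pn [x /setIP [xu xv]].
      apply/bigcupP; exists x => //; rewrite !inE.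
      move: xu; rewrite inE => /orP [| /imsetP [y yN ->]].
        by rewrite inE => /andP [eux _]; rewrite (sym x) eux.
      rewrite hpn; move: yN; rewrite inE => /andP [euy _]; by rewrite (sym y) euy orbT.
    apply: leq_trans (subset_leq_card sub) _.
    apply: leq_trans (card_bigcup_le _ _) _.
    apply: leq_trans (_ : \sum_(x in Y v) (2 * k) <= _).
      apply: leq_sum => x _; apply: leq_trans (leq_card_setU _ _).1 _.
      rewrite (hreg x) (hreg (pv x)); lia.
    rewrite sum_nat_const.
    have : #|Y v| <= 2 * k.
      apply: leq_trans (leq_card_setU _ _).1 _.
      have := leq_imset_card nx (Nv v); have := NvK v; lia.
    nia.
  - move=> v; set n := #|Nv v|.
    have vN : v \notin Nv v by rewrite inE irr.
    have NT : Nv v != setT by apply: contraNneq vN => ->; rewrite inE.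
    have [b1 _] := EE_bound hpn hnp hneq hcl (erefl n) NT.
    have kn : k <= n + 2 := Nvk v.
    have nb := @numbound n (ltac:(lia)).
    have p4 : 0 < 4 ^ n by rewrite expn_gt0.
    rewrite -(leq_pmul2l p4).
    have k2 : 16 * k ^ 2 <= 16 * (n + 2) ^ 2 by rewrite leq_mul2l leq_exp2r // kn orbT.
    apply: leq_trans (_ : 16 * k ^ 2 * (3 ^ n * #|{ffun T -> bool}|) <= _).
      by rewrite mulnCA leq_mul2l b1 orbT.
    apply: leq_trans (_ : 16 * (n + 2) ^ 2 * (3 ^ n * #|{ffun T -> bool}|) <= _).
      by rewrite leq_mul2r k2 orbT.
    by rewrite mulnA leq_mul2r nb orbT.
  - lia.
  - lia.
  - exact: M0.
exists [set u | f u && ~~ f (nx u)]; split.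
  move=> v w; rewrite /cycle_adj -/nx !inE => /orP[/eqP <- | /eqP <-].
    by case: (f (nx v)); rewrite /= ?andbF.
  by case: (f (nx w)); rewrite /= ?andbF ?andbT.
move=> v; right; have := hf v; rewrite /A /EE inE negb_forall_in => /exists_inP [w wN hw].
exists w; first by rewrite inE; rewrite negbK in hw.
by move: wN; rewrite inE.
Qed.
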